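(* Let $k\ge 2$ be an even integer and let $f:\{0,1\}^d\to\{0,1\}$ be $\varepsilon$-far from linear. If $x_1,\dots,x_k$ are sampled uniformly and independently from $\{0,1\}^d$, then $$\Pr\Big[\sum_{i=1}^k f(x_i)\neq f(x_1\oplus\cdots\oplus x_k)\Big]\ge\varepsilon,$$ where the sum on the left is taken mod 2.
   Context: $\oplus$ denotes bitwise XOR. A function $f:\{0,1\}^d\to\{0,1\}$ is linear if there is $S\subseteq[d]$ with $f(x)=\sum_{i\in S}x[i]\bmod 2$ for all $x$. $f$ is $\varepsilon$-far from linear if $f$ differs from every linear function on at least an $\varepsilon$ fraction of $\{0,1\}^d$. *)

(* Defs.v *)
From mathcomp Require Import all_boot all_order all_algebra.
Set Implicit Arguments. Unset Strict Implicit. Unset Printing Implicit Defensive.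
Import Order.TTheory GRing.Theory Num.Theory.
Local Open Scope ring_scope.

(* Points of {0,1}^d are finite functions 'I_d -> bool; mod-2 addition is addb (xor). *)
Definition cube (d : nat) := {ffun 'I_d -> bool}.

Definition linfun_S (d : nat) (S : {set 'I_d}) (x : cube d) : bool :=
  \big[addb/false]_(i in S) x i.

Definition is_linear (d : nat) (f : cube d -> bool) : Prop :=
  exists S : {set 'I_d}, forall x, f x = linfun_S S x.

Definition dist (R : numFieldType) (d : nat) (f g : cube d -> bool) : R :=
  #|[set x : cube d | f x != g x]|%:R / (2 ^ d)%:R.

Definition eps_far (R : numFieldType) (d : nat) (eps : R) (f : cube d -> bool) : Prop :=
  forall g : cube d -> bool, is_linear g -> eps <= dist R f g.

Definition xorall (d k : nat) (xs : {ffun 'I_k -> cube d}) : cube d :=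
  [ffun j => \big[addb/false]_(i < k) xs i j].

Definition k_test_reject (R : numFieldType) (d k : nat) (f : cube d -> bool) : R :=
  #|[set xs : {ffun 'I_k -> cube d} |
       (\big[addb/false]_(i < k) f (xs i)) != f (xorall xs)]|%:R
  / #|{ffun 'I_k -> cube d}|%:R.

(* Main.v *)
Require Import Defs.
From mathcomp Require Import all_boot all_order all_algebra.
From mathcomp Require Import ring lra.
Import Order.TTheory GRing.Theory Num.Theory.
Local Open Scope ring_scope.

Section Key.
Variable R : realFieldType.
Lemma key (I : finType) (a : I -> R) (c : R) (k : nat) (i0 : I) :
  (2 <= k)%N -> ~~ odd k -> (forall i, a i <= c) -> \sum_i a i ^+ 2 = 1 ->
  -1 <= \sum_i a i -> \sum_i a i ^+ k.+1 <= c.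
Proof.
move=> k2 ek hc Hs Hneg.
have a2le i : a i ^+ 2 <= 1.
  rewrite -Hs (bigD1 i) //= lerDl sumr_ge0 // => j _; exact: sqr_ge0.
have ab i : -1 <= a i <= 1.
  have := a2le i; move=> h; apply/andP; split; nra.
case: (lerP 0 c) => c0.
  apply: (@le_trans _ _ (\sum_i c * a i ^+ 2)); last by rewrite -big_distrr /= Hs mulr1.
  apply: ler_sum => i _.
  case: k k2 ek => [|[|n]] //= _ ek.
  case: (lerP 0 (a i)) => ha.
    have h1 : a i ^+ n.+1 <= c.
      rewrite exprS; apply: le_trans (hc i).
      apply: ler_piMr => //; apply: exprn_ile1 => //; by case/andP: (ab i).
    rewrite (_ : a i ^+ n.+3 = a i ^+ n.+1 * a i ^+ 2); last by rewrite -exprD addn2.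
    by rewrite ler_wpM2r // sqr_ge0.
  apply: (@le_trans _ _ 0); last by rewrite mulr_ge0 // sqr_ge0.
  rewrite exprS mulr_le0_ge0 //; first exact: ltW.
  by apply: exprn_even_ge0.
have aneg i : a i < 0 by apply: le_lt_trans (hc i) c0.
have h0 i : 0 <= - a i - a i ^+ 2.
  have := ab i; have := aneg i; move=> h1 /andP [h2 h3]; nra.
have hs : \sum_i (- a i - a i ^+ 2) = 0.
  apply/le_anti/andP; split; last by apply: sumr_ge0 => i _; exact: h0.
  rewrite sumrB sumrN Hs; lra.
have am1 i : a i = -1.
  have := psumr_eq0P (fun i _ => h0 i) hs (i:=i) isT => e.
  have e2 : a i * (1 + a i) = 0.
    transitivity (- (- a i - a i ^+ 2)); first by ring.
    by rewrite e oppr0.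
  move/eqP: e2; rewrite mulf_eq0 => /orP [/eqP e3|/eqP e3].
    by have := aneg i; rewrite e3 ltxx.
  lra.
rewrite (eq_bigr (fun i => - (a i ^+ 2))); last first.
  move=> i _; rewrite am1 -signr_odd /= (negbTE ek) expr1 sqrrN expr1n //.
rewrite sumrN Hs; have := hc i0; rewrite am1; lra.
Qed.
End Key.
Section Fourier.
Variables (R : realFieldType) (d : nat).
Definition z0 : cube d := [ffun _ => false].
Definition xorv (x y : cube d) : cube d := [ffun j => x j (+) y j].
Definition chi (S : {set 'I_d}) (x : cube d) : R := (-1) ^+ linfun_S S x.
Definition NN : R := (2 ^ d)%:R.

Lemma card_cube : #|{ffun 'I_d -> bool}| = (2 ^ d)%N.
Proof. by rewrite card_ffun card_bool card_ord. Qed.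

Lemma NN_neq0 : NN != 0.
Proof. by rewrite pnatr_eq0 -lt0n expn_gt0. Qed.

Lemma chi_prod S x : chi S x = \prod_(j in S) (-1) ^+ x j.
Proof. rewrite /chi /linfun_S. exact: (big_morph (fun b : bool => (-1) ^+ b : R) (@signr_addb R) (erefl : ((-1) ^+ false : R) = 1)) . Qed.

Lemma lin_xor S x y : linfun_S S (xorv x y) = linfun_S S x (+) linfun_S S y.
Proof. rewrite /linfun_S -big_split /=; apply: eq_bigr => i _; by rewrite ffunE. Qed.

Lemma chi_xor S x y : chi S (xorv x y) = chi S x * chi S y.
Proof. by rewrite /chi lin_xor signr_addb. Qed.

Lemma chi_xorall k S (xs : {ffun 'I_k -> cube d}) :
  chi S (xorall xs) = \prod_(i < k) chi S (xs i).
Proof.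
rewrite /chi /linfun_S.
have -> : \big[addb/false]_(j in S) xorall xs j =
          \big[addb/false]_(i < k) \big[addb/false]_(j in S) xs i j.
  rewrite (@exchange_big _ _ addb); apply: eq_bigr => j _; by rewrite ffunE.
exact: (big_morph (fun b : bool => (-1) ^+ b : R) (@signr_addb R) (erefl : ((-1) ^+ false : R) = 1)) .
Qed.

Lemma sum_chi z : \sum_(S : {set 'I_d}) chi S z = if z == z0 then NN else 0.
Proof.
transitivity (\prod_(j < d) ((-1) ^+ z j + 1) : R).
  have -> : \prod_(j < d) ((-1) ^+ z j + 1) =
     \prod_(j < d) \sum_(b : bool) (if b then (-1) ^+ z j else 1 : R).
    by apply: eq_bigr => j _; rewrite big_bool.
  rewrite bigA_distr_bigA /=.
  rewrite (reindex (fun phi : {ffun 'I_d -> bool} => [set j | phi j])) /=.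
    apply: eq_bigr => phi _; rewrite chi_prod big_mkcond /=.
    by apply: eq_bigr => j _; rewrite inE.
  exists (fun S : {set 'I_d} => [ffun j => j \in S]) => x _.
    by apply/ffunP => j; rewrite ffunE inE.
  by apply/setP => j; rewrite inE ffunE.
case: eqP => [->|/eqP nz].
  rewrite (eq_bigr (fun _ => 2)); last by move=> j _; rewrite ffunE expr0.
  by rewrite prodr_const card_ord /NN natrX.
have [j hj] : exists j, z j.
  apply/existsP; apply: contraNT nz => /existsPn H.
  apply/eqP/ffunP => j; rewrite ffunE; exact/negbTE/H.
by rewrite (bigD1 j) //= hj expr1 addNr mul0r.
Qed.

Lemma xorv_z0 x y : (xorv x y == z0) = (x == y).
Proof.
apply/eqP/eqP => [H|->].
  apply/ffunP => j; move/ffunP: H => /(_ j); rewrite !ffunE.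
  by case: (x j); case: (y j).
by apply/ffunP=> j; rewrite !ffunE addbb.
Qed.

Variable f : cube d -> bool.
Definition FF x : R := (-1) ^+ f x.
Definition hat S : R := NN^-1 * \sum_x FF x * chi S x.

Lemma inversion y : \sum_S hat S * chi S y = FF y.
Proof.
transitivity (NN^-1 * \sum_S \sum_x FF x * chi S (xorv x y)).
  rewrite big_distrr /=; apply: eq_bigr => S _; rewrite -mulrA big_distrl /=.
  congr (_ * _); apply: eq_bigr => x _; by rewrite chi_xor mulrA.
rewrite exchange_big /=.
under eq_bigr do rewrite -big_distrr /= sum_chi xorv_z0.
rewrite (bigD1 y) //= eqxx big1 ?addr0; last by move=> x /negbTE ->; rewrite mulr0.
by rewrite mulrC -mulrA mulfV ?NN_neq0 // mulr1.
Qed.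

Lemma FF2 x : FF x * FF x = 1.
Proof. by rewrite /FF; case: (f x); rewrite ?expr0 ?expr1 ?mulr1 ?mulrNN ?mulr1. Qed.

Lemma parseval : \sum_S hat S ^+ 2 = 1.
Proof.
transitivity (\sum_y \sum_S NN^-1 * (FF y * (hat S * chi S y))).
  rewrite exchange_big; apply: eq_bigr => S _.
  rewrite expr2 {2}/hat big_distrr big_distrr; apply: eq_bigr => y _ /=; ring.
transitivity (NN^-1 * \sum_y FF y * \sum_S hat S * chi S y).
  rewrite [RHS]big_distrr; apply: eq_bigr => y _.
  rewrite big_distrr big_distrr; apply: eq_bigr => S _ /=; ring.
under eq_bigr do rewrite inversion FF2.
by rewrite sumr_const card_cube -/NN mulVf ?NN_neq0.
Qed.

Lemma count_sum (T : finType) (P : pred T) :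
  \sum_x ((P x)%:R : R) = #|[set x | P x]|%:R.
Proof.
rewrite -sumr_const [RHS]big_mkcond; apply: eq_bigr => x _; rewrite inE.
by case: (P x).
Qed.

Lemma hat_dist S : hat S = 1 - 2 * dist R f (linfun_S S).
Proof.
have e x : FF x * chi S x = 1 - 2 * ((f x != linfun_S S x) : nat)%:R.
  rewrite /FF /chi; case: (f x); case: (linfun_S S x); rewrite /= ?expr0 ?expr1; ring.
rewrite /hat /dist; under eq_bigr do rewrite e.
rewrite sumrB -big_distrr /= (@count_sum _ (fun x => f x != linfun_S S x)) sumr_const card_cube -/NN.
rewrite mulrBr mulVf ?NN_neq0 //; congr (_ - _).
by rewrite mulrCA [_^-1 * _]mulrC.
Qed.

Lemma main_id k : \sum_(xs : {ffun 'I_k -> cube d})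
   (\prod_(i < k) FF (xs i)) * FF (xorall xs) = NN ^+ k * \sum_S hat S ^+ k.+1.
Proof.
under eq_bigr => xs _ do rewrite -(inversion (xorall xs)) big_distrr /=.
rewrite exchange_big big_distrr /=; apply: eq_bigr => S _.
under eq_bigr do rewrite chi_xorall mulrCA -big_split /=.
rewrite -big_distrr /=.
rewrite -(bigA_distr_bigA (fun (i : 'I_k) (x : cube d) => FF x * chi S x)) /=.
rewrite prodr_const card_ord.
have -> : \sum_x FF x * chi S x = NN * hat S.
  by rewrite /hat mulrA mulfV ?NN_neq0 // mul1r.
by rewrite exprMn mulrCA -exprS.
Qed.

Lemma sgn_ne (a b : bool) : ((-1) ^+ (a (+) b) : R) = 1 - 2 * ((a != b) : nat)%:R.
Proof. case: a; case: b; rewrite /= ?expr0 ?expr1; ring. Qed.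

Lemma rej_id k : \sum_(xs : {ffun 'I_k -> cube d})
   (\prod_(i < k) FF (xs i)) * FF (xorall xs) =
   #|{ffun 'I_k -> cube d}|%:R -
   2 * #|[set xs : {ffun 'I_k -> cube d} |
       (\big[addb/false]_(i < k) f (xs i)) != f (xorall xs)]|%:R.
Proof.
under eq_bigr => xs _ do rewrite /FF -(big_morph (fun b : bool => (-1) ^+ b : R) (@signr_addb R) (erefl : ((-1) ^+ false : R) = 1)) -signr_addb sgn_ne.
rewrite sumrB -big_distrr /= sumr_const.
by rewrite (@count_sum _ (fun xs : {ffun 'I_k -> cube d} => (\big[addb/false]_(i < k) f (xs i)) != f (xorall xs))).
Qed.

End Fourier.

Theorem theorem1p2 (R : realFieldType) (d k : nat) (eps : R)
    (f : cube d -> bool) :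
  (2 <= k)%N -> ~~ odd k -> eps_far eps f ->
  eps <= k_test_reject R k f.
Proof.
move=> k2 ek far.
have hle S : hat R d f S <= 1 - 2 * eps.
  rewrite hat_dist; have := far (linfun_S S) (ex_intro _ S (fun _ => erefl)) => h; lra.
have hsum : -1 <= \sum_S hat R d f S.
  have e : \sum_S hat R d f S * chi R d S (z0 d) = \sum_S hat R d f S.
    apply: eq_bigr => S _; rewrite (_ : chi R d S (z0 d) = 1) ?mulr1 //.
    by rewrite /chi /linfun_S big1 // => i _; rewrite ffunE.
  rewrite -e inversion /FF; case: (f (z0 d)); rewrite /= ?expr0 ?expr1 //; lra.
have X := @key R _ _ _ _ (set0 : {set 'I_d}) k2 ek hle (parseval R d f) hsum.
have E := main_id R d f k; rewrite (rej_id R d f k) card_ffun card_cube card_ord natrX -/(NN R d) in E.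
rewrite /k_test_reject card_ffun card_cube card_ord natrX -/(NN R d).
have Mpos : 0 < NN R d ^+ k by rewrite exprn_gt0 // ltr0n expn_gt0.
rewrite ler_pdivlMr //.
have H2 := ler_wpM2l (ltW Mpos) X.
lra.
Qed.
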